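(* Let $\hat a=a_1+a_2\varepsilon$ and $\hat b=b_1+b_2\varepsilon$ be dual complex numbers ($a_1,a_2,b_1,b_2\in\mathbb C$), and let $\hat q=q_1+q_2 j+(q_3+q_4 j)\varepsilon$ ($q_1,\dots,q_4\in\mathbb C$) be a unit dual quaternion such that $\hat q^*\hat a\hat q=\hat b$. Then $\hat a=\hat b$ or $\hat a=\overline{\hat b}$, where $\overline{\hat b}=\overline{b_1}+\overline{b_2}\varepsilon$.
   Context: $\mathbb{Q}$ denotes the real quaternions with units $i,j,k$; complex numbers are identified with quaternions $a+bi$ (so $jz=\bar z j$). $\varepsilon$ satisfies $\varepsilon\ne0$, $\varepsilon^2=0$ and commutes with quaternions. A dual quaternion is $\tilde p_{st}+\tilde p_{\mathcal I}\varepsilon$ with quaternions $\tilde p_{st},\tilde p_{\mathcal I}$, conjugate $\hat p^*=\tilde p_{st}^*+\tilde p_{\mathcal I}^*\varepsilon$. A dual quaternion $\hat p$ is unit if $|\hat p|=1$, where $|\hat p|=|\tilde p_{st}|+\frac{\mathrm{sc}(\tilde p_{st}^*\tilde p_{\mathcal I})}{|\tilde p_{st}|}\varepsilon$ for $\tilde p_{st}\ne0$ (and $|\tilde p_{\mathcal I}|\varepsilon$ otherwise), $\mathrm{sc}(\tilde p)=\frac12(\tilde p+\tilde p^* )$; equivalently $\hat p^*\hat p=\hat p\hat p^*=1$. *)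

(* Defs.v *)
From HB Require Import structures.
From mathcomp Require Import all_boot all_order all_algebra.
From mathcomp Require Import complex.
Set Implicit Arguments. Unset Strict Implicit. Unset Printing Implicit Defensive.
Import Order.TTheory GRing.Theory Num.Theory.
Local Open Scope ring_scope.

Record quat (R : Type) := Quat { qr : R; qi : R; qj : R; qk : R }.

Section Quat.
Variable R : rcfType.

Definition qmul (p q : quat R) : quat R :=
  Quat (qr p * qr q - qi p * qi q - qj p * qj q - qk p * qk q)
       (qr p * qi q + qi p * qr q + qj p * qk q - qk p * qj q)
       (qr p * qj q - qi p * qk q + qj p * qr q + qk p * qi q)
       (qr p * qk q + qi p * qj q - qj p * qi q + qk p * qr q).
Definition qadd (p q : quat R) : quat R :=
  Quat (qr p + qr q) (qi p + qi q) (qj p + qj q) (qk p + qk q).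
Definition qconj (p : quat R) : quat R := Quat (qr p) (- qi p) (- qj p) (- qk p).
Definition qzero : quat R := Quat 0 0 0 0.
Definition qone : quat R := Quat 1 0 0 0.
Definition qnorm (p : quat R) : R :=
  Num.sqrt (qr p ^+ 2 + qi p ^+ 2 + qj p ^+ 2 + qk p ^+ 2).
Definition qsc (p : quat R) : R := qr p.
Definition qofC (z : R[i]) : quat R := Quat (@complex.Re R z) (@complex.Im R z) 0 0.

(* Dual quaternions p_st + p_I eps *)
Record dquat := DQuat { dst : quat R; dinf : quat R }.

Definition dqmul (p q : dquat) : dquat :=
  DQuat (qmul (dst p) (dst q)) (qadd (qmul (dst p) (dinf q)) (qmul (dinf p) (dst q))).
Definition dqconj (p : dquat) : dquat := DQuat (qconj (dst p)) (qconj (dinf p)).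

(* |p| as a dual number (real part, eps part) *)
Definition dqnorm (p : dquat) : R * R :=
  if (qr (dst p), qi (dst p), qj (dst p), qk (dst p)) != (0, 0, 0, 0) then (qnorm (dst p), qsc (qmul (qconj (dst p)) (dinf p)) / qnorm (dst p))
  else (0, qnorm (dinf p)).
Definition dq_unit (p : dquat) : Prop := dqnorm p = (1, 0).

Definition dcplx (a1 a2 : R[i]) : dquat := DQuat (qofC a1) (qofC a2).
End Quat.

(* Main.v *)
Require Import Defs.
From mathcomp Require Import all_boot all_order all_algebra.
From mathcomp Require Import complex ring lra.
Import Order.TTheory GRing.Theory Num.Theory.
Local Open Scope ring_scope.

Theorem lemma3p4 (R : rcfType) (a1 a2 b1 b2 : R[i]) (q : dquat R) :
  dq_unit q ->
  dqmul (dqmul (dqconj q) (dcplx a1 a2)) q = dcplx b1 b2 ->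
  dcplx a1 a2 = dcplx b1 b2 \/ dcplx a1 a2 = dcplx (conjc b1) (conjc b2).
Proof.
case: q => [[p0 p1 p2 p3] [r0 r1 r2 r3]].
case: a1 => x1 y1; case: a2 => x2 y2; case: b1 => u1 v1; case: b2 => u2 v2.
rewrite /dq_unit /dqnorm /=.
case: ifP => _; last by case=> /eqP; rewrite eq_sym oner_eq0.
rewrite /qnorm /qsc /=.
case=> hn hw.
rewrite hn divr1 in hw.
have hN : p0 ^+ 2 + p1 ^+ 2 + p2 ^+ 2 + p3 ^+ 2 = 1.
  by rewrite -[LHS]sqr_sqrtr ?hn ?expr1n // !addr_ge0 // sqr_ge0.
clear hn.
rewrite /dqmul /dcplx /qofC /=.
case=> H1 H2 H3 H4 H5 H6 H7 H8.
set N := p0 ^+ 2 + p1 ^+ 2 + p2 ^+ 2 + p3 ^+ 2 in hN.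
set w0 := p0 * r0 - - p1 * r1 - - p2 * r2 - - p3 * r3 in hw.
pose ci := p0 ^+ 2 + p1 ^+ 2 - p2 ^+ 2 - p3 ^+ 2.
pose cj := 2 * (p1 * p2 - p0 * p3).
pose ck := 2 * (p1 * p3 + p0 * p2).
pose wj := p0 * r2 + p1 * r3 - p2 * r0 - p3 * r1.
pose wk := p0 * r3 - p1 * r2 + p2 * r1 - p3 * r0.
have E1 : u1 = x1 * N by rewrite -H1 /N; ring.
have E2 : v1 = y1 * ci by rewrite -H2 /ci; ring.
have E3 : y1 * cj = 0 by rewrite -H3 /cj; ring.
have E4 : y1 * ck = 0 by rewrite -H4 /ck; ring.
have E5 : u2 = x2 * N + 2 * x1 * w0 by rewrite -H5 /N /w0; ring.
have E6 : v2 * N = y2 * ci * N + 2 * y1 * (cj * wk - ck * wj + w0 * ci).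
  by rewrite -H6 /N /ci /cj /ck /wk /wj /w0; ring.
have E7 : y1 = 0 -> y2 * cj = 0 by move=> y0; rewrite -H7 y0 /cj; ring.
have E8 : y1 = 0 -> y2 * ck = 0 by move=> y0; rewrite -H8 y0 /ck; ring.
have EC : ci ^+ 2 + cj ^+ 2 + ck ^+ 2 = N ^+ 2 by rewrite /ci /cj /ck /N; ring.
rewrite hN ?mulr1 in E1 E5 E6 EC; rewrite hw mulr0 addr0 in E5; rewrite hw mul0r addr0 in E6.
rewrite expr1n in EC.
have ci1 : cj = 0 -> ck = 0 -> ci = 1 \/ ci = -1.
  move=> j0 k0; rewrite j0 k0 expr0n /= !addr0 in EC.
  have : (ci - 1) * (ci + 1) = ci ^+ 2 - 1 by ring.
  rewrite EC subrr.
  move/eqP; rewrite mulf_eq0 => /orP [/eqP h|/eqP h]; [left|right]; lra.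
have fin : ci = 1 \/ ci = -1 -> v2 = y2 * ci ->
  DQuat (Quat x1 y1 0 0) (Quat x2 y2 0 0) = DQuat (Quat u1 v1 0 0) (Quat u2 v2 0 0) \/
  DQuat (Quat x1 y1 0 0) (Quat x2 y2 0 0) = DQuat (Quat u1 (- v1) 0 0) (Quat u2 (- v2) 0 0).
  move=> [] hc hv; [left|right]; by rewrite E1 E5 E2 hv hc ?mulrN1 ?opprK ?mulr1.
have [y0|y0] := eqVneq y1 0.
  have [z0|z0] := eqVneq y2 0.
    left; by rewrite E1 E5 E2 E6 y0 z0 !(mul0r, mulr0, addr0).
  have j0 : cj = 0 by move: (E7 y0) => /eqP; rewrite mulf_eq0 (negbTE z0) => /eqP.
  have k0 : ck = 0 by move: (E8 y0) => /eqP; rewrite mulf_eq0 (negbTE z0) => /eqP.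
  apply: fin; first exact: ci1.
  by rewrite E6 y0 !(mul0r, mulr0, addr0).
have j0 : cj = 0 by move/eqP: E3; rewrite mulf_eq0 (negbTE y0) => /eqP.
have k0 : ck = 0 by move/eqP: E4; rewrite mulf_eq0 (negbTE y0) => /eqP.
apply: fin; first exact: ci1.
by rewrite E6 j0 k0 !(mul0r, mulr0, subrr, addr0).
Qed.
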